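(* In the linear deterministic diamond network with a disturbing node with gains $n_1,n_2,n_3,n_4,m$, suppose $n_1=n_2$ and $m<n_1$. Then the linear capacity is $C=\min\big(n_1-m,\ \max(n_3,n_4)\big)$.
   Context: The shift matrix $Q$ is the $q\times q$ matrix over $\mathbb{F}_2$ with $Q_{i+1,i}=1$ for $1\le i\le q-1$ and all other entries $0$, where $q=\max(n_1,n_2,n_3,n_4,m)$ and all gains are nonnegative integers. Network: source $S$, relays $A,B$, destination $D$, disturbing node $M$; gains $n_1$ ($S\to A$), $n_2$ ($S\to B$), $n_3$ ($A\to D$), $n_4$ ($B\to D$), $m$ ($M\to A$ and $M\to B$). Each node transmits $x_i\in\mathbb{F}_2^q$ and receives $y_j=\sum_{k:(k,j)\text{ an edge}}Q^{q-n_{(k,j)}}x_k$; relays use linear maps $x_A=G_Ay_A$, $x_B=G_By_B$ with $G_A,G_B$ arbitrary $q\times q$ matrices over $\mathbb{F}_2$. Then $y_D=G_Sx_S+G_Mx_M$ with $G_S=Q^{q-n_3}G_AQ^{q-n_1}+Q^{q-n_4}G_BQ^{q-n_2}$ and $G_M=Q^{q-n_3}G_AQ^{q-m}+Q^{q-n_4}G_BQ^{q-m}$. The rate $R(G_A,G_B)$ is the maximum dimension of a subspace $\mathcal{X}\subseteq\mathbb{F}_2^q$ such that for all $x_S,x_S'\in\mathcal{X}$, $x_M,x_M'\in\mathbb{F}_2^q$, $G_Sx_S+G_Mx_M=G_Sx_S'+G_Mx_M'$ implies $x_S=x_S'$. The linear capacity is $C=\max_{G_A,G_B}R(G_A,G_B)$.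 *)

(* Defs.v *)
From HB Require Import structures.
From mathcomp Require Import all_boot all_order all_algebra.
Unset Strict Implicit. Unset Printing Implicit Defensive.
Import GRing.Theory.
Local Open Scope ring_scope.

Definition qdim (n1 n2 n3 n4 m : nat) : nat :=
  maxn (maxn (maxn n1 n2) (maxn n3 n4)) m.

(* Shift matrix: Q_{i+1,i} = 1 (1-indexed), i.e. Q i j = 1 iff i = j+1 (0-indexed). *)
Definition shiftQ (q : nat) : 'M['F_2]_q :=
  \matrix_(i < q, j < q) (if (i : nat) == (j : nat).+1 then 1 else 0).

Definition chan (q n : nat) : 'M['F_2]_q := (shiftQ q) ^+ (q - n).

Definition GS (n1 n2 n3 n4 m : nat) (GA GB : 'M['F_2]_(qdim n1 n2 n3 n4 m)) :=
  let q := qdim n1 n2 n3 n4 m in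
  chan q n3 *m GA *m chan q n1 + chan q n4 *m GB *m chan q n2.

Definition GM (n1 n2 n3 n4 m : nat) (GA GB : 'M['F_2]_(qdim n1 n2 n3 n4 m)) :=
  let q := qdim n1 n2 n3 n4 m in
  chan q n3 *m GA *m chan q m + chan q n4 *m GB *m chan q m.

Definition admissible (n1 n2 n3 n4 m : nat) (GA GB : 'M['F_2]_(qdim n1 n2 n3 n4 m))
  (X : {vspace 'cV['F_2]_(qdim n1 n2 n3 n4 m)}) : Prop :=
  forall xS xS' : 'cV['F_2]_(qdim n1 n2 n3 n4 m), xS \in X -> xS' \in X ->
  forall xM xM' : 'cV['F_2]_(qdim n1 n2 n3 n4 m),
    GS n1 n2 n3 n4 m GA GB *m xS + GM n1 n2 n3 n4 m GA GB *m xM =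
    GS n1 n2 n3 n4 m GA GB *m xS' + GM n1 n2 n3 n4 m GA GB *m xM' ->
    xS = xS'.

Definition is_rate (n1 n2 n3 n4 m : nat) (GA GB : 'M['F_2]_(qdim n1 n2 n3 n4 m))
  (r : nat) : Prop :=
  (exists X, admissible n1 n2 n3 n4 m GA GB X /\ \dim X = r) /\
  (forall X, admissible n1 n2 n3 n4 m GA GB X -> (\dim X <= r)%N).

Definition is_linear_capacity (n1 n2 n3 n4 m : nat) (c : nat) : Prop :=
  (exists GA GB, is_rate n1 n2 n3 n4 m GA GB c) /\
  (forall GA GB r, is_rate n1 n2 n3 n4 m GA GB r -> (r <= c)%N).

(* Main.v *)
Require Import Defs.
From mathcomp Require Import all_boot all_order all_algebra.
From mathcomp Require Import zify.
Set Implicit Arguments. Unset Strict Implicit.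
Import GRing.Theory.
Local Open Scope ring_scope.

Definition F := 'F_2.
Definition vec q (f : nat -> 'F_2) : 'cV['F_2]_q := \col_(i < q) f i.
Definition get q (v : 'cV['F_2]_q) (l : nat) : 'F_2 :=
  \sum_(j < q) (if (j:nat) == l then v j 0 else 0).

Lemma sum_delta q a (c : nat -> 'F_2) :
  \sum_(j < q) (if (j:nat) == a then c (j:nat) else 0) = if (a < q)%N then c a else 0.
Proof.
case: ltnP => H.
  rewrite (bigD1 (Ordinal H)) //= eqxx big1 ?addr0 // => j /eqP Hj.
  case: eqP => // E; case: Hj; exact: val_inj.
by rewrite big1 // => j _; case: eqP => // E; move: (ltn_ord j); lia.
Qed.

Lemma get_vec q f l : get (vec q f) l = if (l < q)%N then f l else 0.
Proof.
rewrite /get -(sum_delta q l f); apply: eq_bigr => j _.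
by case: eqP => // _; rewrite mxE.
Qed.

Lemma get_ord q (v : 'cV['F_2]_q) (i : 'I_q) : get v i = v i 0.
Proof.
rewrite /get (bigD1 i) //= eqxx big1 ?addr0 // => j /eqP Hj.
case: eqP => // E; case: Hj; exact: val_inj.
Qed.

Lemma vec_get q (v : 'cV['F_2]_q) : v = vec q (get v).
Proof. by apply/matrixP => i j; rewrite (ord1 j) mxE get_ord. Qed.

Lemma vec_ext q f g : (forall i, (i < q)%N -> f i = g i) -> vec q f = vec q g.
Proof. by move=> H; apply/matrixP => i j; rewrite !mxE H. Qed.

Lemma shift_vec q f :
  shiftQ q *m vec q f = vec q (fun i => if (0 < i)%N then f i.-1 else 0).
Proof.
apply/matrixP => i k; rewrite !mxE.
rewrite (eq_bigr (fun j : 'I_q => if (j:nat) == i.-1 then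
    (if (0 < i)%N then f (j:nat) else 0) else 0)).
  by rewrite (sum_delta q i.-1 (fun j => if (0 < i)%N then f j else 0)); case: ifP => // /negbT; move: (ltn_ord i); lia.
move=> j _; rewrite !mxE.
case: (i : nat) => [|i'] /=; first by rewrite mul0r; case: eqP.
by rewrite eqSS eq_sym; case: eqP => _; rewrite ?mul1r ?mul0r.
Qed.

Lemma shiftk_vec q k f :
  shiftQ q ^+ k *m vec q f = vec q (fun i => if (k <= i)%N then f (i - k)%N else 0).
Proof.
elim: k f => [|k IH] f.
  by rewrite expr0 mul1mx; apply: vec_ext => i _; rewrite subn0.
rewrite exprS -mulmxE -mulmxA IH shift_vec; apply: vec_ext => i _.
by case: i => [|i] //=; rewrite ?ltnS ?subSS.
Qed.

Definition selM q (c s : nat) : 'M['F_2]_q :=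
  \matrix_(i < q, j < q) (if ((i:nat) < c)%N && ((j:nat) == i + s)%N then 1 else 0).

Lemma sel_vec q c s f : selM q c s *m vec q f =
  vec q (fun i => if ((i < c) && (i + s < q))%N then f (i + s)%N else 0).
Proof.
apply/matrixP => i k; rewrite !mxE.
rewrite (eq_bigr (fun j : 'I_q => if (j:nat) == (i + s)%N then
    (if ((i:nat) < c)%N then f (j:nat) else 0) else 0)).
  by rewrite (sum_delta q (i + s)%N (fun j => if ((i:nat) < c)%N then f j else 0)); case: (i < c)%N; case: (i + s < q)%N.
move=> j _; rewrite !mxE.
by case: (i < c)%N; case: eqP => _ /=; rewrite ?mul1r ?mul0r.
Qed.

Definition deltas q (L : seq 'I_q) : seq 'cV['F_2]_q :=
  [seq delta_mx i (0 : 'I_1) | i <- L].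
Definition spanL q (L : seq 'I_q) : {vspace 'cV['F_2]_q} := span (deltas L).

Lemma span_mem q (L : seq 'I_q) (v : 'cV['F_2]_q) :
  (forall i : 'I_q, i \notin L -> v i 0 = 0) -> v \in spanL L.
Proof.
move=> H; rewrite (matrix_sum_delta v); apply: memv_suml => i _.
rewrite big_ord1; case: (boolP (i \in L)) => iL.
  by apply: memvZ; apply: memv_span; apply: map_f.
by rewrite H // scale0r mem0v.
Qed.

Lemma span_zero q (L : seq 'I_q) (v : 'cV['F_2]_q) :
  v \in spanL L -> forall i : 'I_q, i \notin L -> v i 0 = 0.
Proof.
rewrite /spanL; set s := deltas L.
move/(@coord_span _ _ _ (in_tuple s)) => -> i iL.
rewrite summxE big1 // => k _; rewrite mxE.
have : (in_tuple s)`_k \in s by apply: mem_nth; exact: ltn_ord.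
case/mapP => j jL ->; rewrite mxE.
case: eqP => [E|]; last by rewrite mulr0.
by move: iL; rewrite E jL.
Qed.

Lemma dim_inj q (X : {vspace 'cV['F_2]_q}) (M : 'M['F_2]_q) (L : seq 'I_q) :
  (forall x, x \in X -> M *m x = 0 -> x = 0) ->
  (forall x (i : 'I_q), x \in X -> i \notin L -> (M *m x) i 0 = 0) ->
  (\dim X <= size L)%N.
Proof.
move=> H1 H2.
pose f : 'End('cV['F_2]_q) := linfun (mulmx M).
have e : (X :&: lker f)%VS = 0%VS.
  apply/eqP; rewrite -subv0; apply/subvP => x.
  rewrite memv_cap memv_ker lfunE /= memv0 => /andP[xX /eqP Mx].
  by apply/eqP; apply: H1.
rewrite -(limg_dim_eq e).
have hd := dim_span (deltas L); rewrite size_map in hd; apply: leq_trans hd.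
apply: dimvS; apply/subvP => y /memv_imgP [x xX ->].
by rewrite lfunE /=; apply: span_mem => i iL; apply: H2.
Qed.

Definition rangeL q a k : seq 'I_q := pmap insub (iota a k).

Lemma mem_rangeL q a k (i : 'I_q) : (i \in rangeL q a k) = (a <= i < a + k)%N.
Proof. by rewrite /rangeL mem_pmap_sub mem_iota. Qed.

Lemma size_rangeL q a k : (size (rangeL q a k) <= k)%N.
Proof. by rewrite /rangeL size_pmap_sub; apply: leq_trans (count_size _ _) _; rewrite size_iota. Qed.

Lemma chan_split q a b : (a <= b <= q)%N ->
  chan q a = shiftQ q ^+ (q - b) *m shiftQ q ^+ (b - a).
Proof. by move=> h; rewrite /chan mulmxE -exprD; congr (_ ^+ _); lia. Qed.

Lemma get0 q l : get (0 : 'cV['F_2]_q) l = 0.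
Proof. by rewrite /get big1 // => j _; rewrite mxE; case: eqP. Qed.

Lemma GMe n1 n3 n4 m GA GB : (m <= n1)%N ->
  GM n1 n1 n3 n4 m GA GB =
  GS n1 n1 n3 n4 m GA GB *m shiftQ (qdim n1 n1 n3 n4 m) ^+ (n1 - m).
Proof.
move=> h; have hq : (n1 <= qdim n1 n1 n3 n4 m)%N by rewrite /qdim; lia.
rewrite /GM /GS /= (@chan_split _ m n1); last by apply/andP.
by rewrite mulmxDl /chan !mulmxA.
Qed.

Lemma ub n1 n3 n4 m GA GB X : (m < n1)%N ->
  admissible n1 n1 n3 n4 m GA GB X ->
  (\dim X <= minn (n1 - m) (maxn n3 n4))%N.
Proof.
move=> Hm adm.
have hn1 : (n1 <= qdim n1 n1 n3 n4 m)%N by rewrite /qdim; lia.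
have hN : (maxn n3 n4 <= qdim n1 n1 n3 n4 m)%N by rewrite /qdim; lia.
have GMe' := GMe GA GB (ltnW Hm).
have GSe : GS n1 n1 n3 n4 m GA GB = shiftQ (qdim n1 n1 n3 n4 m) ^+ (qdim n1 n1 n3 n4 m - maxn n3 n4) *m
   (shiftQ (qdim n1 n1 n3 n4 m) ^+ (maxn n3 n4 - n3) *m GA *m chan (qdim n1 n1 n3 n4 m) n1 +
    shiftQ (qdim n1 n1 n3 n4 m) ^+ (maxn n3 n4 - n4) *m GB *m chan (qdim n1 n1 n3 n4 m) n1).
  rewrite /GS /= (@chan_split _ n3 (maxn n3 n4)); last by apply/andP; split => //; exact: leq_maxl.
  rewrite (@chan_split _ n4 (maxn n3 n4)); last by apply/andP; split => //; exact: leq_maxr.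
  by rewrite mulmxDr !mulmxA.
move: GMe' GSe adm.
set q := qdim n1 n1 n3 n4 m.
move=> GMe' GSe adm.
rewrite leq_min; apply/andP; split.
  set d := (n1 - m)%N.
  have hd : (d <= q)%N by rewrite /d; lia.
  apply: (leq_trans (@dim_inj _ X (selM q d 0) (rangeL q 0 d) _ _)); last exact: size_rangeL.
    move=> x xX Mx.
    have hx : forall i, (i < d)%N -> get x i = 0.
      move=> i hi; have := congr1 (fun v => get v i) Mx.
      rewrite /= {1}(vec_get x) sel_vec get_vec get0 addn0 hi /=.
      by have -> : (i < q)%N by lia.
    pose z := vec q (fun j => get x (j + d)%N).
    have xz : x = shiftQ q ^+ d *m z.
      rewrite /z shiftk_vec {1}(vec_get x); apply: vec_ext => i hi.
      by case: leqP => h; [rewrite subnK | rewrite hx].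
    apply: (adm x 0 xX (mem0v _) 0 z).
    by rewrite !mulmx0 addr0 add0r GMe' -mulmxA -xz.
  move=> x i xX; rewrite mem_rangeL => hi.
  rewrite (vec_get x) sel_vec mxE; case: ifP => // /andP [h1 _]; move: hi; lia.
apply: (leq_trans (@dim_inj _ X (GS n1 n1 n3 n4 m GA GB) (rangeL q (q - maxn n3 n4) (maxn n3 n4)) _ _)); last exact: size_rangeL.
  move=> x xX Gx; apply: (adm x 0 xX (mem0v _) 0 0).
  by rewrite !mulmx0 Gx.
move=> x i xX; rewrite mem_rangeL => hi.
rewrite GSe; set T := (_ + _); rewrite -mulmxA (vec_get (T *m x)) shiftk_vec mxE.
case: ifP => // h; move: hi (ltn_ord i); lia.
Qed.

Lemma key q n m a c (x z : 'cV['F_2]_q) (i : 'I_q) :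
  (m < n <= q)%N -> (a <= q)%N -> (c <= a)%N -> (c <= n - m)%N ->
  (q - a <= i < q - a + c)%N ->
  (shiftQ q ^+ (q - a) *m selM q c (q - n) *m chan q n *m x +
   shiftQ q ^+ (q - a) *m selM q c (q - n) *m chan q m *m z) i 0 = get x (i - (q - a)).
Proof.
move=> h1 h2 h3 h4 hi.
rewrite /chan -!mulmxA (vec_get x) (vec_get z) !shiftk_vec !sel_vec !shiftk_vec !mxE.
have -> : (q - a <= i)%N by lia.
have -> : ((i - (q - a) < c) && (i - (q - a) + (q - n) < q))%N by apply/andP; split; lia.
have -> : (q - n <= i - (q - a) + (q - n))%N by lia.
have -> : (q - m <= i - (q - a) + (q - n))%N = false by apply/negbTE; lia.
have e : (i - (q - a) < q)%N by lia.
by rewrite addr0 addnK get_vec e.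
Qed.

Lemma adm_core q n m a c (x x' z z' : 'cV['F_2]_q) :
  (m < n <= q)%N -> (a <= q)%N -> (c <= a)%N -> (c <= n - m)%N ->
  x \in spanL (rangeL q 0 c) -> x' \in spanL (rangeL q 0 c) ->
  shiftQ q ^+ (q - a) *m selM q c (q - n) *m chan q n *m x +
   shiftQ q ^+ (q - a) *m selM q c (q - n) *m chan q m *m z =
  shiftQ q ^+ (q - a) *m selM q c (q - n) *m chan q n *m x' +
   shiftQ q ^+ (q - a) *m selM q c (q - n) *m chan q m *m z' -> x = x'.
Proof.
move=> h1 h2 h3 h4 xX x'X E.
rewrite (vec_get x) (vec_get x'); apply: vec_ext => j hj.
case: (ltnP j c) => hjc.
  have hi : (j + (q - a) < q)%N by lia.
  have := congr1 (fun M : 'cV['F_2]_q => M (Ordinal hi) 0) E => /=.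
  rewrite !(@key q n m a c) //= ?addnK //; apply/andP; split; lia.
have -> : get x j = x (Ordinal hj) 0 by rewrite -get_ord.
have -> : get x' j = x' (Ordinal hj) 0 by rewrite -get_ord.
rewrite (span_zero xX) ?(span_zero x'X) // mem_rangeL /=; lia.
Qed.

Lemma dimX q c : (c <= q)%N -> \dim (spanL (rangeL q 0 c)) = c.
Proof.
move=> hc; apply/eqP; rewrite eqn_leq; apply/andP; split.
  have hd := dim_span (deltas (rangeL q 0 c)); rewrite size_map in hd.
  exact: (leq_trans hd (size_rangeL _ _ _)).
set X := spanL _; set Y := spanL (rangeL q c (q - c)).
have cov : (fullv <= X + Y)%VS.
  apply/subvP => v _; rewrite (vec_get v).
  have -> : vec q (get v) = vec q (fun i => if (i < c)%N then get v i else 0)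
     + vec q (fun i => if (i < c)%N then 0 else get v i).
    by apply/matrixP => i j; rewrite !mxE; case: ifP; rewrite ?addr0 ?add0r.
  apply: memv_add; apply: span_mem => i; rewrite mem_rangeL mxE; case: ifP => // h hn; exfalso; move: h hn (ltn_ord i); lia.
have := dimvS cov; rewrite dimvf dim_matrix mulr1.
have h2 := (dimv_add_leqif X Y).1.
have hY : (\dim Y <= size (deltas (rangeL q c (q - c))))%N by exact: dim_span.
rewrite size_map in hY.
have hY2 := leq_trans hY (size_rangeL _ _ _).
move=> hq; move: (leq_trans hq h2) hY2; lia.
Qed.
Local Close Scope ring_scope.
Theorem mainTheorem9 (n1 n2 n3 n4 m : nat) :
  n1 = n2 -> (m < n1)%N ->
  is_linear_capacity n1 n2 n3 n4 m (minn (n1 - m) (maxn n3 n4)).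
Proof.
Local Open Scope ring_scope.
move=> e hm; subst n2.
have hn1 : (n1 <= qdim n1 n1 n3 n4 m)%N by rewrite /qdim; lia.
have hn3 : (n3 <= qdim n1 n1 n3 n4 m)%N by rewrite /qdim; lia.
have hn4 : (n4 <= qdim n1 n1 n3 n4 m)%N by rewrite /qdim; lia.
split; last first.
  by move=> GA GB r [[X [adm <-]] _]; exact: ub hm adm.
case: (leqP n4 n3) => h34.
  exists (selM _ (minn (n1 - m) n3) (qdim n1 n1 n3 n4 m - n1)), 0.
  split; last by move=> X adm; have := ub hm adm; lia.
  exists (spanL (rangeL _ 0 (minn (n1 - m) n3))); split; last by apply: dimX; lia.
  move=> x x' xX x'X z z' E.
  have h1 : (m < n1 <= qdim n1 n1 n3 n4 m)%N by lia.
  apply: (@adm_core _ n1 m n3 _ x x' z z' h1 hn3 _ _ xX x'X); [lia | lia |].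
  move: E; rewrite /GS /GM !mulmx0 !mul0mx !addr0; exact.
exists 0, (selM _ (minn (n1 - m) n4) (qdim n1 n1 n3 n4 m - n1)).
split; last by move=> X adm; have := ub hm adm; lia.
exists (spanL (rangeL _ 0 (minn (n1 - m) n4))); split; last by apply: dimX; lia.
move=> x x' xX x'X z z' E.
have h1 : (m < n1 <= qdim n1 n1 n3 n4 m)%N by lia.
apply: (@adm_core _ n1 m n4 _ x x' z z' h1 hn4 _ _ xX x'X); [lia | lia |].
move: E; rewrite /GS /GM !mulmx0 !mul0mx !add0r; exact.
Qed.
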